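(* Let $F:S_N\times\mathbb{R}^N\times\mathbb{R}\to\mathbb{R}$ (independent of $x$) satisfy (H0), (H1) and (H3), and let $l:\mathbb{R}^N\to S_N$ be a linear map. Then the function $g:\mathbb{R}^N\to\mathbb{R}$, $g(p)=F\big(l(p)+p\otimes p,\ p,\ 1\big)$, is convex.
   Context: $S_N$ is the space of real symmetric $N\times N$ matrices and $p\otimes p$ is the matrix $(p_ip_j)_{i,j}$. For $0<\lambda\le\Lambda$, $\mathcal M^\pm$ are the Pucci operators ($\sup$/$\inf$ of $\mathrm{tr}(AM)$ over $A\in S_N$ with eigenvalues in $[\lambda,\Lambda]$). Hypotheses (for $x$-independent $F$): (H0) $F(sM,sp,su)=sF(M,p,u)$ for $s\ge0$; (H1) for some $\gamma,\delta\ge0$: $\mathcal M^-(M-M')-\gamma|p-q|-\delta|u-v|\le F(M,p,u)-F(M',q,v)\le\mathcal M^+(M-M')+\gamma|p-q|+\delta|u-v|$ for all arguments; (H3) with $G(M,p,u)=-F(-M,-p,-u)$: $G(M-M',p-q,u-v)\le F(M,p,u)-F(M',q,v)\le F(M-M',p-q,u-v)$. *)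

(* Defs.v *)
From Stdlib Require Import Reals ClassicalEpsilon.
From mathcomp Require Import ssreflect ssrfun ssrbool eqtype ssrnat seq fintype.
Set Implicit Arguments.
Open Scope R_scope.

Definition Vec (N : nat) := 'I_N -> R.
Definition Mat (N : nat) := 'I_N -> 'I_N -> R.

Definition sumI (N : nat) (f : 'I_N -> R) : R :=
  foldr (fun i acc => f i + acc) 0 (enum 'I_N).

Definition symmetric (N : nat) (M : Mat N) : Prop := forall i j, M i j = M j i.

Definition mat_sub N (M M' : Mat N) : Mat N := fun i j => M i j - M' i j.
Definition mat_add N (M M' : Mat N) : Mat N := fun i j => M i j + M' i j.
Definition mat_opp N (M : Mat N) : Mat N := fun i j => - M i j.
Definition mat_scale N (s : R) (M : Mat N) : Mat N := fun i j => s * M i j.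
Definition vec_sub N (p q : Vec N) : Vec N := fun i => p i - q i.
Definition vec_opp N (p : Vec N) : Vec N := fun i => - p i.
Definition vec_scale N (s : R) (p : Vec N) : Vec N := fun i => s * p i.
Definition vec_add N (p q : Vec N) : Vec N := fun i => p i + q i.

Definition vnorm N (p : Vec N) : R := sqrt (sumI (fun i => p i * p i)).

Definition tensor N (p : Vec N) : Mat N := fun i j => p i * p j.

Definition trace N (M : Mat N) : R := sumI (fun i => M i i).
Definition mat_mul N (A M : Mat N) : Mat N := fun i j => sumI (fun k => A i k * M k j).

Definition eigenvalue N (A : Mat N) (a : R) : Prop :=
  exists v : Vec N, (exists i, v i <> 0) /\
    forall i, sumI (fun j => A i j * v j) = a * v i.

Definition pucci_class N (lam Lam : R) (A : Mat N) : Prop :=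
  symmetric A /\ forall a, eigenvalue A a -> lam <= a <= Lam.

Definition pucci_values N (lam Lam : R) (M : Mat N) : R -> Prop :=
  fun x => exists A, pucci_class lam Lam A /\ x = trace (mat_mul A M).

Definition is_glb (E : R -> Prop) (m : R) : Prop :=
  (forall x, E x -> m <= x) /\ (forall b, (forall x, E x -> b <= x) -> b <= m).

Definition pucci_plus N (lam Lam : R) (M : Mat N) : R :=
  epsilon (inhabits 0) (fun s => is_lub (pucci_values lam Lam M) s).
Definition pucci_minus N (lam Lam : R) (M : Mat N) : R :=
  epsilon (inhabits 0) (fun s => is_glb (pucci_values lam Lam M) s).

Definition H0 N (F : Mat N -> Vec N -> R -> R) : Prop :=
  forall (s : R) M p u, 0 <= s -> symmetric M ->
    F (mat_scale s M) (vec_scale s p) (s * u) = s * F M p u.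

Definition H1 N (lam Lam gamma delta : R) (F : Mat N -> Vec N -> R -> R) : Prop :=
  forall M M' p q u v, symmetric M -> symmetric M' ->
    pucci_minus lam Lam (mat_sub M M') - gamma * vnorm (vec_sub p q)
      - delta * Rabs (u - v) <= F M p u - F M' q v /\
    F M p u - F M' q v <= pucci_plus lam Lam (mat_sub M M')
      + gamma * vnorm (vec_sub p q) + delta * Rabs (u - v).

Definition Gop N (F : Mat N -> Vec N -> R -> R) : Mat N -> Vec N -> R -> R :=
  fun M p u => - F (mat_opp M) (vec_opp p) (- u).

Definition H3 N (F : Mat N -> Vec N -> R -> R) : Prop :=
  forall M M' p q u v, symmetric M -> symmetric M' ->
    Gop F (mat_sub M M') (vec_sub p q) (u - v) <= F M p u - F M' q v /\
    F M p u - F M' q v <= F (mat_sub M M') (vec_sub p q) (u - v).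

Definition linear_to_sym N (l : Vec N -> Mat N) : Prop :=
  (forall p, symmetric (l p)) /\
  (forall a b p q, l (vec_add (vec_scale a p) (vec_scale b q))
                   = mat_add (mat_scale a (l p)) (mat_scale b (l q))).

Definition convex_fun N (g : Vec N -> R) : Prop :=
  forall p q (t : R), 0 <= t <= 1 ->
    g (vec_add (vec_scale t p) (vec_scale (1 - t) q)) <= t * g p + (1 - t) * g q.

(* Main.v *)
Require Import Defs.
From Stdlib Require Import Reals.
From mathcomp Require Import ssreflect ssrfun ssrbool eqtype ssrnat seq fintype.
From Stdlib Require Import Classical ClassicalEpsilon FunctionalExtensionality Lra.
Open Scope R_scope.
Set Implicit Arguments.

Lemma sumI_S n (f : 'I_n.+1 -> R) : sumI f = f ord0 + sumI (fun j => f (lift ord0 j)).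
Proof.
rewrite /sumI enum_ordSl /=. f_equal.
elim: (enum 'I_n) => [|a s IH] //=. by rewrite IH.
Qed.

Lemma sumI_0 (f : 'I_0 -> R) : sumI f = 0.
Proof. rewrite /sumI. case: (enum 'I_0) (size_enum_ord 0) => //. Qed.

Lemma sumI_ext N (f g : 'I_N -> R) : (forall i, f i = g i) -> sumI f = sumI g.
Proof. move=> H; rewrite /sumI; elim: (enum 'I_N) => //= a s ->; by rewrite H. Qed.

Lemma sumI_add N (f g : 'I_N -> R) : sumI (fun i => f i + g i) = sumI f + sumI g.
Proof. rewrite /sumI; elim: (enum 'I_N) => /= [|a s ->]; lra. Qed.

Lemma sumI_scale N c (f : 'I_N -> R) : sumI (fun i => c * f i) = c * sumI f.
Proof. rewrite /sumI; elim: (enum 'I_N) => /= [|a s ->]; lra. Qed.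

Lemma sumI_le N (f g : 'I_N -> R) : (forall i, f i <= g i) -> sumI f <= sumI g.
Proof. move=> H; rewrite /sumI; elim: (enum 'I_N) => /= [|a s IH]; [lra|]. have := H a; lra. Qed.

Lemma sumI_zero N : sumI (fun _ : 'I_N => 0) = 0.
Proof. rewrite /sumI; elim: (enum 'I_N) => /= [|a s ->]; lra. Qed.

Lemma sumI_nonneg N (f : 'I_N -> R) : (forall i, 0 <= f i) -> 0 <= sumI f.
Proof. move=> H; rewrite -(sumI_zero N); by apply: sumI_le. Qed.

Lemma sumI_term N (f : 'I_N -> R) i : (forall j, 0 <= f j) -> f i <= sumI f.
Proof.
move=> H; rewrite /sumI; have : i \in enum 'I_N by rewrite mem_enum.
elim: (enum 'I_N) => //= a s IH; rewrite in_cons => /orP [/eqP ->|Hi].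
- have : 0 <= foldr (fun i0 acc => f i0 + acc) 0 s.
    elim: s {IH} => /= [|b s' IH']; [lra|]. have := H b; lra.
  lra.
- have := IH Hi; have := H a; lra.
Qed.

Lemma sumI_delta N (f : 'I_N -> R) i : (forall j, j <> i -> f j = 0) -> sumI f = f i.
Proof.
elim: N f i => [|n IH] f i H; first by have := ltn_ord i.
rewrite sumI_S. case: (unliftP ord0 i) H => [j ->|->] H.
- rewrite (IH (fun j => f (lift ord0 j)) j).
  + rewrite H; [lra|]. move=> E. have := neq_lift ord0 j. by rewrite -E eqxx.
  + move=> k Hk; apply: H => E. by apply: Hk; apply: (lift_inj E).
- rewrite (@sumI_ext _ _ (fun _ => 0)) ?sumI_zero; [lra|].
  move=> j; apply: H => E. have := neq_lift ord0 j. by rewrite E eqxx.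
Qed.

Definition dot N (x y : Vec N) := sumI (fun i => x i * y i).
Definition mv N (B : Mat N) (x : Vec N) : Vec N := fun i => sumI (fun j => B i j * x j).
Definition qf N (B : Mat N) (x : Vec N) := dot x (mv B x).
Definition liftv n (x : Vec n.+1) : Vec n := fun j => x (lift ord0 j).
Definition liftm n (B : Mat n.+1) : Mat n := fun i j => B (lift ord0 i) (lift ord0 j).
Definition rowv n (B : Mat n.+1) : Vec n := fun j => B ord0 (lift ord0 j).
Definition cons_v n (a : R) (y : Vec n) : Vec n.+1 :=
  fun i => match unlift ord0 i with Some j => y j | None => a end.

Lemma cons_v0 n a (y : Vec n) : cons_v a y ord0 = a.
Proof. by rewrite /cons_v unlift_none. Qed.
Lemma cons_vl n a (y : Vec n) j : cons_v a y (lift ord0 j) = y j.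
Proof. by rewrite /cons_v liftK. Qed.
Lemma liftv_cons n a (y : Vec n) : liftv (cons_v a y) = y.
Proof. apply: functional_extensionality => j; by rewrite /liftv cons_vl. Qed.

Lemma dot_S n (x y : Vec n.+1) : dot x y = x ord0 * y ord0 + dot (liftv x) (liftv y).
Proof. by rewrite /dot sumI_S. Qed.

Lemma dot_nonneg N (x : Vec N) : 0 <= dot x x.
Proof. apply: sumI_nonneg => i; nra. Qed.

Lemma dot_sym N (x y : Vec N) : dot x y = dot y x.
Proof. apply: sumI_ext => i; lra. Qed.

Lemma mv_S0 n (B : Mat n.+1) x :
  mv B x ord0 = B ord0 ord0 * x ord0 + dot (rowv B) (liftv x).
Proof. by rewrite /mv sumI_S. Qed.

Lemma mv_Sl n (B : Mat n.+1) x i :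
  mv B x (lift ord0 i) = B (lift ord0 i) ord0 * x ord0 + mv (liftm B) (liftv x) i.
Proof. by rewrite /mv sumI_S. Qed.

Lemma qf_S n (B : Mat n.+1) x : Defs.symmetric B ->
  qf B x = B ord0 ord0 * (x ord0 * x ord0) + 2 * x ord0 * dot (rowv B) (liftv x)
           + qf (liftm B) (liftv x).
Proof.
move=> HS. rewrite /qf dot_S mv_S0.
have -> : dot (liftv x) (liftv (mv B x)) =
   x ord0 * dot (rowv B) (liftv x) + dot (liftv x) (mv (liftm B) (liftv x)).
  rewrite /dot -sumI_scale -sumI_add; apply: sumI_ext => i.
  rewrite /liftv mv_Sl HS /rowv /liftv; lra.
lra.
Qed.

Lemma dot_zero N (v : Vec N) : dot v (fun _ => 0) = 0.
Proof. rewrite /dot (@sumI_ext _ _ (fun _ => 0)) ?sumI_zero // => i; lra. Qed.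

Lemma qf_zero N (B : Mat N) : qf B (fun _ => 0) = 0.
Proof. rewrite /qf /dot (@sumI_ext _ _ (fun _ => 0)) ?sumI_zero // => i; lra. Qed.

Lemma qf_cons n (B : Mat n.+1) a y : Defs.symmetric B ->
  qf B (cons_v a y) = B ord0 ord0 * (a * a) + 2 * a * dot (rowv B) y + qf (liftm B) y.
Proof. move=> HS; by rewrite qf_S // liftv_cons cons_v0. Qed.

Lemma CS N (v y : Vec N) : dot v y * dot v y <= (dot v v + 1) * dot y y.
Proof.
have H : forall s, 0 <= s * s * dot v v - 2 * s * dot v y + dot y y.
  move=> s.
  have -> : s * s * dot v v - 2 * s * dot v y + dot y y =
            sumI (fun i => (s * v i - y i) * (s * v i - y i)).
    rewrite (@sumI_ext _ _ (fun i => (s*s)*(v i*v i) + ((-(2*s))*(v i * y i) + y i * y i))).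
      rewrite !sumI_add !sumI_scale /dot; ring.
    move=> i; ring.
  apply: sumI_nonneg => i /=; apply: Rle_0_sqr.
set V := dot v v; set u := dot v y; set Y := dot y y.
have HV : 0 <= V by apply: dot_nonneg.
have HY : 0 <= Y by apply: dot_nonneg.
have Hw : 0 < V + 1 by lra.
have := H (u / (V + 1)).
set s := u / (V + 1).
have Hs : s * (V + 1) = u by rewrite /s; field; lra.
move=> H1.
have H2 : 0 <= (s * s * V - 2 * s * u + Y) * ((V + 1) * (V + 1)) by apply: Rmult_le_pos; [exact: H1 | apply: Rle_0_sqr].
have E : (s * s * V - 2 * s * u + Y) * ((V + 1) * (V + 1)) = u * u * V - 2 * u * u * (V + 1) + Y * ((V+1)*(V+1)).
  rewrite -Hs; ring.
rewrite E in H2.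
have Hu : 0 <= u * u by apply: Rle_0_sqr.
apply: (Rmult_le_reg_l (V + 1)) => //.
have -> : (V + 1) * ((V + 1) * Y) = Y * ((V + 1) * (V + 1)) by ring.
have -> : (V + 1) * (u * u) = u * u * V + u * u by ring.
lra.
Qed.

Lemma psd_split N (B : Mat N) : Defs.symmetric B -> (forall x, 0 <= qf B x) ->
  (exists x : Vec N, (exists i, x i <> 0) /\ forall i, mv B x i = 0) \/
  (exists e, 0 < e /\ forall x, e * dot x x <= qf B x).
Proof.
elim: N B => [|n IH] B HS HP.
  right; exists 1; split; [lra|] => x; rewrite /qf /dot !sumI_0; lra.
set b := B ord0 ord0; set v := rowv B.
have HSl : Defs.symmetric (liftm B) by move=> i j; rewrite /liftm HS.
have Hb : 0 <= b.
  have := HP (cons_v 1 (fun _ => 0)); rewrite qf_cons // dot_zero qf_zero -/b; lra.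
case: (Req_dec b 0) => Hb0.
-
  have Hvv : dot v v = 0.
    have Hc := dot_nonneg v.
    case: (Req_dec (dot v v) 0) => // Hne.
    set Q0 := qf (liftm B) v.
    have := HP (cons_v (-(Rabs Q0 + 1) / (2 * dot v v)) v).
    rewrite qf_cons // -/b -/v -/Q0 Hb0.
    have -> : 2 * (- (Rabs Q0 + 1) / (2 * dot v v)) * dot v v = -(Rabs Q0 + 1).
      field; lra.
    have := Rle_abs Q0; lra.
  have Hvi : forall j, v j = 0.
    move=> j; have := sumI_term (fun i => v i * v i) j (fun i => Rle_0_sqr (v i)).
    rewrite -/(dot v v) Hvv => H.
    have := Rle_0_sqr (v j); rewrite /Rsqr => H'.
    have : v j * v j = 0 by lra.
    by move/Rmult_integral => [].
  left; exists (cons_v 1 (fun _ => 0)); split.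
    exists ord0; rewrite cons_v0; lra.
  move=> i; case: (unliftP ord0 i) => [j ->|->].
  + rewrite mv_Sl cons_v0 liftv_cons HS.
    have -> : mv (liftm B) (fun _ => 0) j = 0.
      rewrite /mv (@sumI_ext _ _ (fun _ => 0)) ?sumI_zero // => k; lra.
    have := Hvi j; rewrite /v /rowv => ->; lra.
  + rewrite mv_S0 cons_v0 liftv_cons dot_zero -/b Hb0; lra.
-
  have Hbp : 0 < b by lra.
  set S : Mat n := fun i j => liftm B i j - v i * v j / b.
  have HSS : Defs.symmetric S by move=> i j; rewrite /S HSl; lra.
  have HmvS : forall y i, mv S y i = mv (liftm B) y i - v i * (dot v y / b).
    move=> y i; rewrite /mv /S /dot.
    rewrite (@sumI_ext _ _ (fun j => liftm B i j * y j + (- (v i / b)) * (v j * y j))).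
      rewrite sumI_add sumI_scale; field; lra.
    move=> j; field; lra.
  have HqfS : forall y, qf S y = qf (liftm B) y - dot v y * dot v y / b.
    move=> y; rewrite /qf.
    rewrite {1}/dot (@sumI_ext _ _ (fun i => y i * mv (liftm B) y i + (- (dot v y / b)) * (v i * y i))).
      rewrite sumI_add sumI_scale -/(dot v y); rewrite -/(dot y (mv (liftm B) y)); field; lra.
    move=> i; rewrite HmvS; ring.
  have HPS : forall y, 0 <= qf S y.
    move=> y; rewrite HqfS.
    have := HP (cons_v (- (dot v y / b)) y); rewrite qf_cons // -/b -/v.
    have -> : b * (- (dot v y / b) * - (dot v y / b)) + 2 * - (dot v y / b) * dot v y
              = - (dot v y * dot v y / b) by field; lra.
    lra.
  case: (IH S HSS HPS) => [[y [[i Hi] Hk]] | [e [He Hc]]].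
  + left; exists (cons_v (- (dot v y / b)) y); split.
      by exists (lift ord0 i); rewrite cons_vl.
    move=> k; case: (unliftP ord0 k) => [j ->|->].
    * rewrite mv_Sl cons_v0 liftv_cons HS -/(rowv B j) -/v.
      have := Hk j; rewrite HmvS => H; lra.
    * rewrite mv_S0 cons_v0 liftv_cons -/b -/v; field; lra.
  + set V := dot v v.
    have HV : 0 <= V by apply: dot_nonneg.
    set K := 2 * (V + 1) / (b * b) + 1.
    have HK : 0 < K.
      rewrite /K; have : 0 < 2 * (V + 1) / (b * b).
        apply: Rdiv_lt_0_compat; [lra|]; apply: Rmult_lt_0_compat; lra.
      lra.
    right; exists (Rmin (b / 2) (e / K)); split.
      apply: Rmin_glb_lt; [lra|]; by apply: Rdiv_lt_0_compat.
    move=> x.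
    set e' := Rmin (b / 2) (e / K).
    have He1 : e' <= b / 2 by apply: Rmin_l.
    have He2 : e' <= e / K by apply: Rmin_r.
    have He'p : 0 < e' by apply: Rmin_glb_lt; [lra|]; apply: Rdiv_lt_0_compat.
    have He2' : e' * K <= e.
      have -> : e = (e / K) * K by field; lra.
      apply: Rmult_le_compat_r; lra.
    rewrite qf_S // dot_S -/b -/v.
    set a := x ord0; set y := liftv x; set u := dot v y; set Y := dot y y.
    have HY : 0 <= Y by apply: dot_nonneg.
    have Hcs : u * u <= (V + 1) * Y by apply: CS.
    have Hq : qf (liftm B) y = qf S y + u * u / b by rewrite HqfS -/u; field; lra.
    have HSy := Hc y.
    set z := a + u / b.
    have Ea : a = z - u / b by rewrite /z; ring.
    have Hqf : b * (a * a) + 2 * a * u + qf (liftm B) y = b * (z * z) + qf S y.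
      rewrite Hq Ea; field; lra.
    rewrite Hqf.
    (* a^2 <= 2 z^2 + 2 u^2/b^2 <= 2 z^2 + (K - 1) Y *)
    have Ha2 : a * a <= 2 * (z * z) + 2 * (u * u) / (b * b).
      rewrite Ea.
      have : 0 <= (z + u / b) * (z + u / b) by apply: Rle_0_sqr.
      have -> : 2 * (u * u) / (b * b) = 2 * ((u / b) * (u / b)) by field; lra.
      move=> H0.
      have : (z - u/b) * (z - u/b) + (z + u/b) * (z + u/b) = 2 * (z * z) + 2 * ((u/b) * (u/b)) by ring.
      lra.
    have Hu2 : 2 * (u * u) / (b * b) <= (K - 1) * Y.
      have -> : (K - 1) * Y = 2 * ((V + 1) * Y) / (b * b) by rewrite /K; field; lra.
      apply: Rmult_le_compat_r.
        apply: Rlt_le; apply: Rinv_0_lt_compat; apply: Rmult_lt_0_compat; lra.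
      lra.
    have Hz : 0 <= z * z by apply: Rle_0_sqr.
    have H1 : e' * (a * a + Y) <= e' * (2 * (z * z) + K * Y).
      apply: Rmult_le_compat_l; lra.
    have H2 : e' * (2 * (z * z)) <= b * (z * z).
      have -> : e' * (2 * (z * z)) = (2 * e') * (z * z) by ring.
      apply: Rmult_le_compat_r; lra.
    have H3 : e' * K * Y <= e * Y by apply: Rmult_le_compat_r.
    have H4 : e * Y <= qf S y by exact: HSy.
    lra.
Qed.

Definition shiftm N (A : Mat N) (t : R) : Mat N :=
  fun i j => A i j + (if i == j then t else 0).

Lemma mv_shift N (A : Mat N) t x i : mv (shiftm A t) x i = mv A x i + t * x i.
Proof.
rewrite /mv /shiftm.
rewrite (@sumI_ext _ _ (fun j => A i j * x j + (if i == j then t else 0) * x j)).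
  rewrite sumI_add [X in _ + X](@sumI_delta _ _ i); first by rewrite eqxx.
  move=> j Hj; have : (i == j) = false by apply/eqP => E; apply: Hj.
  by move=> ->; lra.
move=> j; ring.
Qed.

Lemma qf_shift N (A : Mat N) t x : qf (shiftm A t) x = qf A x + t * dot x x.
Proof.
rewrite /qf {1}/dot (@sumI_ext _ _ (fun i => x i * mv A x i + t * (x i * x i))).
  by rewrite sumI_add sumI_scale.
move=> i; rewrite mv_shift; ring.
Qed.

Lemma shift_sym N (A : Mat N) t : Defs.symmetric A -> Defs.symmetric (shiftm A t).
Proof. move=> HS i j; by rewrite /shiftm HS eq_sym. Qed.

Lemma sq_le_dot N (x : Vec N) i : x i * x i <= dot x x.
Proof. exact: (sumI_term (fun j => x j * x j) i (fun j => Rle_0_sqr (x j))). Qed.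

Lemma qf_lower N (A : Mat N) : exists K, forall x, - (K * dot x x) <= qf A x.
Proof.
exists (sumI (fun i => sumI (fun j => Rabs (A i j)))) => x.
set D := dot x x.
have -> : - (sumI (fun i => sumI (fun j => Rabs (A i j))) * D) =
          sumI (fun i => sumI (fun j => - D * Rabs (A i j))).
  symmetry; rewrite (@sumI_ext _ _ (fun i => - D * sumI (fun j => Rabs (A i j)))).
    rewrite sumI_scale; ring.
  move=> i; by rewrite sumI_scale.
rewrite /qf /dot /mv; apply: sumI_le => i.
rewrite -sumI_scale; apply: sumI_le => j.
have Hi := sq_le_dot x i; have Hj := sq_le_dot x j; rewrite -/D in Hi Hj.
have H1 : x i * x j <= D.
  have := Rle_0_sqr (x i - x j); rewrite /Rsqr => H. lra.
have H2 : - D <= x i * x j.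
  have := Rle_0_sqr (x i + x j); rewrite /Rsqr => H. lra.
case: (Rle_lt_dec 0 (A i j)) => HA.
- rewrite Rabs_right; [|lra].
  have : 0 <= A i j * (x i * x j + D) by apply: Rmult_le_pos; lra.
  lra.
- rewrite Rabs_left; [|lra].
  have : 0 <= (- A i j) * (D - x i * x j) by apply: Rmult_le_pos; lra.
  lra.
Qed.

Lemma psd_of_eig N (A : Mat N) lam : 0 < lam -> Defs.symmetric A ->
  (forall a, eigenvalue A a -> lam <= a) -> forall w, 0 <= qf A w.
Proof.
move=> Hlam HS Heig w.
apply: Rnot_lt_le => Hw.
pose T := fun t => forall x, 0 <= qf A x + t * dot x x.
have [K HK] := qf_lower A.
have HTK : T K by move=> x; have := HK x; lra.
have Tpos : forall t, T t -> 0 < t.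
  move=> t Ht; apply: Rnot_le_lt => Ht0.
  have := Ht w; have := dot_nonneg w => Hd.
  have : t * dot w w <= 0.
    have : 0 <= (- t) * dot w w by apply: Rmult_le_pos; lra.
    lra.
  lra.
pose T' := fun s => T (- s).
have Hb : bound T'.
  exists 0 => s Hs; have := Tpos _ Hs; lra.
have Hne : exists s, T' s by exists (- K); rewrite /T' Ropp_involutive.
have [m [Hm1 Hm2]] := completeness T' Hb Hne.
set ts := - m.
have Hlow : forall t, T t -> ts <= t.
  move=> t Ht; have : T' (- t) by rewrite /T' Ropp_involutive.
  move/Hm1; rewrite /ts; lra.
have Hgl : forall c, (forall t, T t -> c <= t) -> c <= ts.
  move=> c Hc; rewrite /ts.
  have : m <= - c.
    apply: Hm2 => s Hs; have := Hc _ Hs; lra.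
  lra.
have Hts0 : 0 <= ts by apply: Hgl => t Ht; have := Tpos _ Ht; lra.
have HTts : T ts.
  move=> x; apply: Rnot_lt_le => Hx.
  have Hd := dot_nonneg x.
  case: (Req_dec (dot x x) 0) => HD.
  - have := HTK x; rewrite HD in Hx *; lra.
  - have HDp : 0 < dot x x by lra.
    set del := - (qf A x + ts * dot x x) / dot x x.
    have Hdel : 0 < del by apply: Rdiv_lt_0_compat; lra.
    have : ~ (forall t, T t -> ts + del <= t).
      move=> H; have := Hgl _ H; lra.
    move/not_all_ex_not => [t Ht].
    have [HTt Hlt] : T t /\ t < ts + del.
      split; [apply: NNPP => HH; apply: Ht => HH'; by []|].
      apply: Rnot_le_lt => HH; apply: Ht => _; exact: HH.
    have := HTt x.
    have : t * dot x x < (ts + del) * dot x x by apply: Rmult_lt_compat_r.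
    have -> : (ts + del) * dot x x = - qf A x.
      rewrite /del; field; lra.
    lra.
have HSs := shift_sym ts HS.
have HPs : forall x, 0 <= qf (shiftm A ts) x by move=> x; rewrite qf_shift; apply: HTts.
case: (psd_split HSs HPs) => [[x [Hx Hk]] | [e [He Hc]]].
- have : eigenvalue A (- ts).
    exists x; split => // i.
    have := Hk i; rewrite mv_shift /mv => H; lra.
  move/Heig; lra.
- have : T (ts - e).
    move=> x; have := Hc x; rewrite qf_shift; lra.
  move/Hlow; lra.
Qed.

Lemma pucci_plus_nonpos N lam Lam (c : R) (w : Vec N) :
  0 < lam -> lam <= Lam -> 0 <= c ->
  pucci_plus lam Lam (fun i j => - (c * (w i * w j))) <= 0.
Proof.
move=> Hl HlL Hc.
set S := pucci_values lam Lam (fun i j => - (c * (w i * w j))).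
have Hup : forall x, S x -> x <= 0.
  move=> x [A [[HS Heig] ->]].
  have Hq := psd_of_eig Hl HS (fun a Ha => proj1 (Heig a Ha)) w.
  have -> : trace (mat_mul A (fun i j => - (c * (w i * w j)))) = - c * qf A w.
    rewrite /trace /mat_mul /qf /dot /mv -sumI_scale; apply: sumI_ext => i.
    rewrite -Rmult_assoc -sumI_scale; apply: sumI_ext => k; ring.
  have : 0 <= c * qf A w by apply: Rmult_le_pos.
  lra.
pose A0 : Mat N := fun i j => if i == j then lam else 0.
have HA0 : pucci_class lam Lam A0.
  split; first by move=> i j; rewrite /A0 eq_sym.
  move=> a [v [[i Hi] Hv]].
  have := Hv i.
  rewrite (@sumI_delta _ _ i); last first.
    move=> j Hj; rewrite /A0; have : (i == j) = false by apply/eqP => E; apply: Hj.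
    by move=> ->; lra.
  rewrite /A0 eqxx => E.
  have : (a - lam) * v i = 0 by lra.
  case/Rmult_integral => H; [lra | by []].
have Hne : exists x, S x.
  by exists (trace (mat_mul A0 (fun i j => - (c * (w i * w j))))), A0.
have Hb : bound S by exists 0.
have [m Hm] := completeness S Hb Hne.
rewrite /pucci_plus.
have Hspec := epsilon_spec (inhabits 0) (fun s => is_lub S s) (ex_intro _ m Hm).
set s := epsilon _ _ in Hspec *.
case: Hspec => _ H2; apply: H2 => x; exact: Hup x.
Qed.

Unset Implicit Arguments.

Theorem mainTheorem18 (N : nat) (lam Lam gamma delta : R)
  (F : Mat N -> Vec N -> R -> R) (l : Vec N -> Mat N) :
  0 < lam -> lam <= Lam -> 0 <= gamma -> 0 <= delta ->
  H0 F -> H1 lam Lam gamma delta F -> H3 F ->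
  linear_to_sym l ->
  convex_fun (fun p => F (mat_add (l p) (tensor p)) p 1).
Proof.
move=> Hl HlL Hg Hd HH0 HH1 HH3 [Hlsym Hlin] p q t Ht /=.
set X := fun p => mat_add (l p) (tensor p).
have HX : forall p, Defs.symmetric (X p).
  move=> p0 i j; rewrite /X /mat_add /tensor Hlsym; ring.
have Hsc : forall (s : R) (M : Mat N), Defs.symmetric M -> Defs.symmetric (mat_scale s M).
  move=> s M HM i j; by rewrite /mat_scale (HM i j).
set r := vec_add (vec_scale t p) (vec_scale (1 - t) q).
rewrite -/(X r) -/(X p) -/(X q).
set W := mat_add (mat_scale t (X p)) (mat_scale (1 - t) (X q)).
have HW : Defs.symmetric W.
  move=> i j; rewrite /W /mat_add /mat_scale HX (HX q); ring_simplify; by rewrite HX.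
have S1 := proj2 (HH3 (X r) W r r 1 1 (HX r) HW).
set c := t * (1 - t).
set w := vec_sub p q.
set Dn : Mat N := fun i j => - (c * (w i * w j)).
have EDn : mat_sub (X r) W = Dn.
  apply: functional_extensionality => i; apply: functional_extensionality => j.
  rewrite /X /mat_sub /W /mat_add /mat_scale /Dn /c /w /vec_sub /tensor /r.
  rewrite (Hlin t (1 - t) p q) /mat_add /mat_scale /vec_add /vec_scale; rewrite /X /mat_add /tensor; ring.
rewrite EDn in S1.
have HDn : Defs.symmetric Dn by move=> i j; rewrite /Dn; ring.
set z := vec_sub r r.
have S2 : F Dn z (1 - 1) <= 0.
  have E0 := HH0 0 Dn z (1 - 1) (Rle_refl 0) HDn.
  have Hs0 : Defs.symmetric (mat_scale 0 Dn) by apply: Hsc.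
  have H := proj2 (HH1 Dn (mat_scale 0 Dn) z (vec_scale 0 z) (1 - 1) (0 * (1 - 1)) HDn Hs0).
  rewrite E0 in H.
  have EM : mat_sub Dn (mat_scale 0 Dn) = Dn.
    apply: functional_extensionality => i; apply: functional_extensionality => j.
    rewrite /mat_sub /mat_scale; ring.
  have Ev : vnorm (vec_sub z (vec_scale 0 z)) = 0.
    rewrite /vnorm (@sumI_ext _ _ (fun _ => 0)) ?sumI_zero ?sqrt_0 //.
    move=> i; rewrite /vec_sub /vec_scale /z /vec_sub; ring.
  rewrite EM Ev in H.
  have Ea : Rabs (1 - 1 - 0 * (1 - 1)) = 0 by rewrite -Rabs_R0; f_equal; ring.
  rewrite Ea in H.
  have Hc : 0 <= c by rewrite /c; apply: Rmult_le_pos; lra.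
  have := pucci_plus_nonpos w Hl HlL Hc; rewrite -/Dn.
  lra.
have Hsq : Defs.symmetric (mat_scale (1 - t) (X q)) by apply: Hsc.
have S3 := proj2 (HH3 W (mat_scale (1 - t) (X q)) r (vec_scale (1 - t) q) 1 ((1 - t) * 1) HW Hsq).
have EM3 : mat_sub W (mat_scale (1 - t) (X q)) = mat_scale t (X p).
  apply: functional_extensionality => i; apply: functional_extensionality => j.
  rewrite /mat_sub /W /mat_add; ring.
have EV3 : vec_sub r (vec_scale (1 - t) q) = vec_scale t p.
  apply: functional_extensionality => i; rewrite /vec_sub /r /vec_add; ring.
have EU3 : 1 - (1 - t) * 1 = t * 1 by ring.
rewrite EM3 EV3 EU3 in S3.
rewrite (HH0 t (X p) p 1) in S3; last by apply: HX.
  2: lra.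
rewrite (HH0 (1 - t) (X q) q 1) in S3; last by apply: HX.
  2: lra.
rewrite -/z in S1; lra.
Qed.
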